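(* Let $\mathcal{I}$ be an instance of SNSAT with $|\mathcal{I}|=n$, and let $\mathcal{K}_\mathcal{I}$ and $\psi_0,\dots,\psi_{n+1}$ be the Kripke structure and formulas associated with $\mathcal{I}$ as described in the context. Then for all $0\le k\le n+1$ and all $r\in\{1,\dots,n\}$: (1) if $k\ge r$, then $v_\mathcal{I}(x_r)=\top$ iff $\mathcal{K}_\mathcal{I},w_{x_r}\models\psi_k$ (where $w_{x_r}$ denotes the track of length one consisting of that state); (2) if $k\ge r+1$, then $v_\mathcal{I}(x_r)=\bot$ iff $\mathcal{K}_\mathcal{I},\overline{w_{x_r}}\models\psi_k$.
   Context: SNSAT: an instance $\mathcal{I}$ consists of Boolean variables $X=\{x_1,\dots,x_n\}$ and propositional formulas $F_1(Z_1),F_2(x_1,Z_2),\dots,F_n(x_1,\dots,x_{n-1},Z_n)$, where $F_i$ uses variables among $x_1,\dots,x_{i-1}$ and $Z_i=\{z_i^1,\dots,z_i^{j_i}\}$, the sets $Z_i$ being pairwise disjoint and disjoint from $X$; $|\mathcal{I}|=n$. The valuation $v_\mathcal{I}$ of $X$ is defined by $v_\mathcal{I}(x_i)=\top$ iff $F_i(v_\mathcal{I}(x_1),\dots,v_\mathcal{I}(x_{i-1}),Z_i)$ is satisfiable. Kripke structures, tracks and semantics: a finite Kripke structure $(\mathcal{AP},W,\delta,\mu,w_0)$ has left-total $\delta\subseteq W\times W$ and labelling $\mu:W\to2^{\mathcal{AP}}$; a track is a nonempty finite sequence of states consecutive in $\delta$; $\mathrm{fst},\mathrm{lst}$ are its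 first/last state. Formulas use proposition letters, $\neg,\wedge$ (other connectives as abbreviations), $\top,\bot$, $\langle A\rangle$, $\langle B\rangle$, $[B]\psi=\neg\langle B\rangle\neg\psi$. $\rho\models p$ iff $p\in\mu(w)$ for all states $w$ of $\rho$; $\rho\models\langle A\rangle\psi$ iff some track $\rho'$ with $\mathrm{fst}(\rho')=\mathrm{lst}(\rho)$ satisfies $\psi$; $\rho\models\langle B\rangle\psi$ iff some proper prefix $\rho(1,i)$, $1\le i<|\rho|$, satisfies $\psi$. The $F_i$ are read as formulas over proposition letters $X\cup Z$. Construction: let $Z=\bigcup_iZ_i$, $R=\{r_1,\dots,r_n\}$, $R_i=R\setminus\{r_i\}$. $\mathcal{K}_\mathcal{I}$ has proposition letters $X\cup Z\cup\{s,t\}\cup R\cup\{p_{\overline{x_i}}:1\le i\le n\}$ and distinct states $s_0$ and, for each $i$, $w_{x_i},\overline{w_{x_i}},\overline{s_i}$, and $w_{z_i^u},\overline{w_{z_i^u}}$ for $1\le u\le j_i$. Labels: $\mu(w_{x_i})=X\cup Z\cup\{s,t\}\cup R_i$; $\mu(\overline{w_{x_i}})=(X\setminus\{x_i\})\cup Z\cup\{s,t\}\cup R_i\cup\{p_{\overline{x_i}}\}$; $\mu(w_{z_i^u})=X\cup Z\cup\{s,t\}\cup R_i$; $\mu(\overline{w_{z_i^u}})=X\cup(Z\setminus\{z_i^u\})\cup\{s,t\}\cup R_i$; $\mu(\overline{s_i})=X\cup Z\cup\{t\}\cup R_i$; $\mu(s_0)=X\cup Z\cup\{s\}\cup R$.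 Call $L_i^0=\{w_{x_i},\overline{w_{x_i}}\}$ and $L_i^u=\{w_{z_i^u},\overline{w_{z_i^u}}\}$ for $1\le u\le j_i$. Transitions: $\overline{w_{x_i}}\to\overline{s_i}\to w_{x_i}$; every state of $L_i^{u}$ has an edge to both states of $L_i^{u+1}$ for $0\le u<j_i$; every state of $L_i^{j_i}$ has an edge to both states of $L_{i-1}^0$ if $i\ge2$, and to $s_0$ if $i=1$; $s_0\to s_0$. The initial state is $w_{x_n}$. Formulas: $\ell_{=2}=\langle B\rangle\top\wedge[B][B]\bot$; $\psi_0=\bot$ and for $k\ge1$, $\psi_k=\langle A\rangle\varphi_k$ with $\varphi_k=(s\wedge\neg t)\wedge\bigwedge_{i=1}^n\big((x_i\wedge\neg r_i)\to F_i(x_1,\dots,x_{i-1},Z_i)\big)\wedge[B]\Big(\big(\bigvee_{i=1}^n\langle A\rangle p_{\overline{x_i}}\big)\to\langle A\rangle\big(\neg s\wedge\ell_{=2}\wedge\langle A\rangle(\ell_{=2}\wedge\neg\psi_{k-1})\big)\Big)$. *)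

(* Defs.v *)
From Stdlib Require Import List Arith Lia.
Import ListNotations.

(* Propositional variables: PX m is x_m, PZ i u is z_i^u. *)
Inductive pvar : Type := PX (m : nat) | PZ (i u : nat).

Inductive pform : Type :=
  | PVar (p : pvar)
  | PTop
  | PBot
  | PNot (a : pform)
  | PAnd (a b : pform)
  | POr (a b : pform).

Fixpoint peval (sigma : pvar -> bool) (f : pform) : bool :=
  match f with
  | PVar p => sigma p
  | PTop => true
  | PBot => false
  | PNot a => negb (peval sigma a)
  | PAnd a b => peval sigma a && peval sigma b
  | POr a b => peval sigma a || peval sigma b
  end.

Fixpoint pvars_ok (P : pvar -> Prop) (f : pform) : Prop :=
  match f with
  | PVar p => P p
  | PTop | PBot => True
  | PNot a => pvars_ok P a
  | PAnd a b | POr a b => pvars_ok P a /\ pvars_ok P b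
  end.

(* An SNSAT instance: n variables x_1..x_n, for each i a number j_i of
   private variables z_i^1..z_i^{j_i}, and formulas F_1..F_n. *)
Record snsat : Type := {
  sn_n : nat;
  sn_j : nat -> nat;
  sn_F : nat -> pform
}.

Definition snsat_wf (I : snsat) : Prop :=
  forall i, 1 <= i <= sn_n I ->
    pvars_ok (fun p => match p with
                       | PX m => 1 <= m < i
                       | PZ i' u => i' = i /\ 1 <= u <= sn_j I i
                       end) (sn_F I i).

Definition sat_given (I : snsat) (i : nat) (v : nat -> Prop) : Prop :=
  exists sigma : pvar -> bool,
    (forall m, 1 <= m < i -> (sigma (PX m) = true <-> v m)) /\
    peval sigma (sn_F I i) = true.

(* vpre I k m = v_I(x_m) for m <= k (built by recursion on k). *)
Fixpoint vpre (I : snsat) (k : nat) : nat -> Prop :=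
  match k with
  | 0 => fun _ => False
  | S k' => fun m => if m <=? k' then vpre I k' m else sat_given I (S k') (vpre I k')
  end.

Definition vI (I : snsat) (r : nat) : Prop := vpre I r r.

(* LX m = x_m, LZ i u = z_i^u, Ls = s, Lt = t, LR i = r_i, LPx i = p_{bar x_i} *)
Inductive letter : Type :=
  | LX (m : nat) | LZ (i u : nat) | Ls | Lt | LR (i : nat) | LPx (i : nat).

Inductive hs : Type :=
  | HP (p : letter)
  | HNeg (a : hs)
  | HAnd (a b : hs)
  | HTop
  | HBot
  | HA (a : hs)
  | HB (a : hs).

Definition HOr (a b : hs) : hs := HNeg (HAnd (HNeg a) (HNeg b)).
Definition HImp (a b : hs) : hs := HNeg (HAnd a (HNeg b)).
Definition HBox_B (a : hs) : hs := HNeg (HB (HNeg a)).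

Record kripke : Type := {
  kst : Type;
  kW : kst -> Prop;
  kdelta : kst -> kst -> Prop;
  kmu : kst -> letter -> Prop;
  kw0 : kst
}.

Fixpoint chain {S : Type} (d : S -> S -> Prop) (rho : list S) : Prop :=
  match rho with
  | [] => True
  | w :: rest =>
      match rest with
      | [] => True
      | w' :: _ => d w w' /\ chain d rest
      end
  end.

Definition track (K : kripke) (rho : list (kst K)) : Prop :=
  rho <> [] /\ Forall (kW K) rho /\ chain (kdelta K) rho.

Definition lst {S : Type} (rho : list S) : option S := hd_error (rev rho).

Fixpoint hs_sat (K : kripke) (rho : list (kst K)) (phi : hs) : Prop :=
  match phi with
  | HP p => forall w, In w rho -> kmu K w p
  | HNeg a => ~ hs_sat K rho a
  | HAnd a b => hs_sat K rho a /\ hs_sat K rho b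
  | HTop => True
  | HBot => False
  | HA a => exists rho', track K rho' /\ hd_error rho' = lst rho /\ hs_sat K rho' a
  | HB a => exists i, 1 <= i < length rho /\ hs_sat K (firstn i rho) a
  end.

(* S0 = s_0, WX i = w_{x_i}, WXb i = bar w_{x_i}, Sb i = bar s_i,
   WZ i u = w_{z_i^u}, WZb i u = bar w_{z_i^u} *)
Inductive kstate : Type :=
  | S0 | WX (i : nat) | WXb (i : nat) | Sb (i : nat) | WZ (i u : nat) | WZb (i u : nat).

Section KI.
Variable I : snsat.

Definition inXr (m : nat) : Prop := 1 <= m <= sn_n I.
Definition inZr (i u : nat) : Prop := 1 <= i <= sn_n I /\ 1 <= u <= sn_j I i.

Definition KW (w : kstate) : Prop :=
  match w with
  | S0 => True
  | WX i | WXb i | Sb i => inXr i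
  | WZ i u | WZb i u => inZr i u
  end.

(* layers L_i^0 = {w_{x_i}, bar w_{x_i}}, L_i^u = {w_{z_i^u}, bar w_{z_i^u}} *)
Definition inL (i u : nat) (w : kstate) : Prop :=
  if u =? 0 then w = WX i \/ w = WXb i else w = WZ i u \/ w = WZb i u.

Definition Kdelta (w w' : kstate) : Prop :=
  (exists i, inXr i /\ w = WXb i /\ w' = Sb i) \/
  (exists i, inXr i /\ w = Sb i /\ w' = WX i) \/
  (exists i u, inXr i /\ u < sn_j I i /\ inL i u w /\ inL i (S u) w') \/
  (exists i, 2 <= i <= sn_n I /\ inL i (sn_j I i) w /\ inL (i - 1) 0 w') \/
  (1 <= sn_n I /\ inL 1 (sn_j I 1) w /\ w' = S0) \/
  (w = S0 /\ w' = S0).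

Definition Kmu (w : kstate) (p : letter) : Prop :=
  match w with
  | WX i | WZ i _ =>
      match p with
      | LX m => inXr m | LZ i' u' => inZr i' u' | Ls => True | Lt => True
      | LR m => inXr m /\ m <> i | LPx _ => False
      end
  | WXb i =>
      match p with
      | LX m => inXr m /\ m <> i | LZ i' u' => inZr i' u' | Ls => True | Lt => True
      | LR m => inXr m /\ m <> i | LPx m => m = i
      end
  | WZb i u =>
      match p with
      | LX m => inXr m | LZ i' u' => inZr i' u' /\ (i', u') <> (i, u)
      | Ls => True | Lt => True
      | LR m => inXr m /\ m <> i | LPx _ => False
      end
  | Sb i =>
      match p with
      | LX m => inXr m | LZ i' u' => inZr i' u' | Ls => False | Lt => True
      | LR m => inXr m /\ m <> i | LPx _ => False
      end
  | S0 =>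
      match p with
      | LX m => inXr m | LZ i' u' => inZr i' u' | Ls => True | Lt => False
      | LR m => inXr m | LPx _ => False
      end
  end.

Definition KI : kripke := {|
  kst := kstate;
  kW := KW;
  kdelta := Kdelta;
  kmu := Kmu;
  kw0 := WX (sn_n I)
|}.

Fixpoint ptr (f : pform) : hs :=
  match f with
  | PVar (PX m) => HP (LX m)
  | PVar (PZ i u) => HP (LZ i u)
  | PTop => HTop
  | PBot => HBot
  | PNot a => HNeg (ptr a)
  | PAnd a b => HAnd (ptr a) (ptr b)
  | POr a b => HOr (ptr a) (ptr b)
  end.

Fixpoint bigand (f : nat -> hs) (n : nat) : hs :=
  match n with 0 => HTop | S n' => HAnd (bigand f n') (f (S n')) end.
Fixpoint bigor (f : nat -> hs) (n : nat) : hs :=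
  match n with 0 => HBot | S n' => HOr (bigor f n') (f (S n')) end.

Definition ell2 : hs := HAnd (HB HTop) (HBox_B (HBox_B HBot)).

Definition phi_body (prev : hs) : hs :=
  HAnd (HAnd (HAnd (HP Ls) (HNeg (HP Lt)))
             (bigand (fun i => HImp (HAnd (HP (LX i)) (HNeg (HP (LR i)))) (ptr (sn_F I i)))
                     (sn_n I)))
       (HBox_B (HImp (bigor (fun i => HA (HP (LPx i))) (sn_n I))
                     (HA (HAnd (HAnd (HNeg (HP Ls)) ell2)
                               (HA (HAnd ell2 (HNeg prev))))))).

Fixpoint psi (k : nat) : hs :=
  match k with
  | 0 => HBot
  | S k' => HA (phi_body (psi k'))
  end.

End KI.

(* Main.v *)
Require Import Defs.
From Stdlib Require Import List Arith Lia Classical ClassicalEpsilon.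
Import ListNotations.

Lemma sat_HImp K rho a b : hs_sat K rho (HImp a b) <-> (hs_sat K rho a -> hs_sat K rho b).
Proof. simpl. split; intros H. - intros Ha. apply NNPP. intro. apply H; auto. - tauto. Qed.

Lemma sat_HBoxB K rho a : hs_sat K rho (HBox_B a) <->
  (forall i, 1 <= i < length rho -> hs_sat K (firstn i rho) a).
Proof. simpl. split; intros H.
- intros i Hi. apply NNPP. intro. apply H. eauto.
- intros [i [Hi Hn]]. apply Hn, H, Hi. Qed.

Lemma sat_bigand K rho f n : hs_sat K rho (bigand f n) <-> (forall i, 1 <= i <= n -> hs_sat K rho (f i)).
Proof. induction n; simpl.
- split; auto. intros _ i Hi; lia.
- rewrite IHn. split.
  + intros [H1 H2] i Hi. destruct (Nat.eq_dec i (S n)). subst; auto. apply H1; lia.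
  + intros H; split. intros i Hi; apply H; lia. apply H; lia. Qed.

Lemma sat_bigor K rho f n : hs_sat K rho (bigor f n) <-> (exists i, 1 <= i <= n /\ hs_sat K rho (f i)).
Proof. induction n; simpl.
- split. tauto. intros [i [Hi _]]; lia.
- unfold HOr. simpl. rewrite IHn. split.
  + intros H. apply NNPP. intro Hn. apply H. split.
    * intros [i [Hi Hs]]. apply Hn. exists i. split; auto; lia.
    * intro. apply Hn. exists (S n). split; auto; lia.
  + intros [i [Hi Hs]] [H1 H2]. destruct (Nat.eq_dec i (S n)). subst; auto.
    apply H1. exists i. split; auto; lia. Qed.

Lemma sat_ell2 K rho : hs_sat K rho ell2 <-> length rho = 2.
Proof. unfold ell2, HBox_B. simpl. split.
- intros [[i [Hi _]] H2]. destruct (Nat.eq_dec (length rho) 2); auto. exfalso.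
  apply H2. exists 2. split. lia. intro H3. apply H3.
  exists 1. rewrite length_firstn. split. lia. auto.
- intros H. split. exists 1. split. lia. auto.
  intros [i [Hi H3]]. apply H3. intros [j [Hj _]]. rewrite length_firstn in Hj. lia. Qed.

Lemma sat_HA_lst K rho1 rho2 a : lst rho1 = lst rho2 -> (hs_sat K rho1 (HA a) <-> hs_sat K rho2 (HA a)).
Proof. intros H; simpl; rewrite H; tauto. Qed.

Definition lsat (I : snsat) (rho : list kstate) (p : letter) : Prop :=
  forall w, In w rho -> Kmu I w p.

Definition letter_of (p : pvar) : letter :=
  match p with PX m => LX m | PZ i u => LZ i u end.

Definition sig (I : snsat) (rho : list kstate) (p : pvar) : bool :=
  if excluded_middle_informative (lsat I rho (letter_of p)) then true else false.

Lemma sig_true I rho p : sig I rho p = true <-> lsat I rho (letter_of p).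
Proof. unfold sig. destruct (excluded_middle_informative _); split; auto; discriminate. Qed.

Lemma ptr_sat I rho f : hs_sat (KI I) rho (ptr f) <-> peval (sig I rho) f = true.
Proof. induction f as [p| | |a IH|a IHa b IHb|a IHa b IHb]; simpl.
- destruct p; simpl; rewrite sig_true; simpl; unfold lsat; tauto.
- tauto.
- split; [tauto|discriminate].
- rewrite IH. destruct (peval _ a); simpl; intuition congruence.
- rewrite IHa, IHb. destruct (peval _ a), (peval _ b); simpl; intuition congruence.
- unfold HOr; simpl. rewrite IHa, IHb. destruct (peval _ a), (peval _ b); simpl; intuition congruence.
Qed.

Lemma peval_ext (P : pvar -> Prop) s1 s2 f : pvars_ok P f -> (forall p, P p -> s1 p = s2 p) -> peval s1 f = peval s2 f.
Proof. intros Hok Hs. induction f as [p| | |a IH|a IHa b IHb|a IHa b IHb]; simpl in *; auto.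
- rewrite IH; auto.
- destruct Hok; rewrite IHa, IHb; auto.
- destruct Hok; rewrite IHa, IHb; auto. Qed.

Lemma vpre_le I k m : 1 <= m <= k -> (vpre I k m <-> vI I m).
Proof. induction k; intros Hm. lia.
destruct (Nat.eq_dec m (S k)). subst; unfold vI; tauto.
simpl. replace (m <=? k) with true by (symmetry; apply Nat.leb_le; lia). apply IHk; lia. Qed.

Lemma vI_S I i : 1 <= i -> (vI I i <-> sat_given I i (vpre I (i - 1))).
Proof. intros Hi. destruct i. lia. unfold vI.
change (vpre I (S i) (S i)) with (if S i <=? i then vpre I i (S i) else sat_given I (S i) (vpre I i)).
replace (S i <=? i) with false by (symmetry; apply Nat.leb_gt; lia). rewrite Nat.sub_succ, Nat.sub_0_r. tauto. Qed.

Definition idx (w : kstate) : nat :=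
  match w with S0 => 0 | WX i | WXb i | Sb i => i | WZ i _ | WZb i _ => i end.

Ltac inLs := repeat match goal with
  | H : inL _ _ _ |- _ => unfold inL in H; simpl in H
  | H : context [?u =? 0] |- _ => destruct (u =? 0)
  | H : _ \/ _ |- _ => destruct H
  | H : _ /\ _ |- _ => destruct H
  | H : exists _, _ |- _ => destruct H
  end; subst.

Lemma delta_idx I w w' : Kdelta I w w' -> idx w <= idx w' + 1.
Proof. unfold Kdelta; intros H; inLs; simpl; lia. Qed.

Lemma S0_abs I w' : Kdelta I S0 w' -> w' = S0.
Proof. unfold Kdelta; intros H; inLs; try discriminate; auto. Qed.

Lemma chain_inv {S} (d : S -> S -> Prop) (Q : S -> Prop) :
  (forall w w', Q w -> d w w' -> Q w') ->
  forall l a, chain d (a :: l) -> Q a -> forall w, In w (a :: l) -> Q w.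
Proof. intros HQ. induction l as [|b l IH]; intros a Hc Ha w Hw.
- destruct Hw as [<-|[]]; auto.
- destruct Hc as [Hab Hc]. destruct Hw as [<-|Hw]; auto. apply (IH b); eauto. Qed.

Lemma IVT I i : forall l a, chain (Kdelta I) (a :: l) -> i <= idx a ->
  (exists w, In w (a :: l) /\ idx w < i) -> exists w, In w (a :: l) /\ idx w = i.
Proof. induction l as [|b l IH]; intros a Hc Ha [w [Hw Hwi]].
- destruct Hw as [<-|[]]. lia.
- destruct (Nat.eq_dec (idx a) i). exists a; simpl; auto.
  destruct Hc as [Hab Hc]. pose proof (delta_idx _ _ _ Hab).
  destruct Hw as [<-|Hw]. lia.
  destruct (IH b Hc) as [w' [Hw' E]]. lia. eauto. exists w'; simpl; auto. Qed.

Lemma chain_S0 I : forall l, chain (Kdelta I) (S0 :: l) -> forall w, In w l -> w = S0.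
Proof. intros l Hc w Hw. assert (In w (S0 :: l)) by (simpl; auto).
  eapply (chain_inv _ (fun w => w = S0)); eauto. intros; subst; eapply S0_abs; eauto. Qed.

Lemma split_before_end I l w : chain (Kdelta I) l -> In S0 l -> In w l -> w <> S0 ->
  exists l1 l2, l = l1 ++ w :: l2 /\ l2 <> [].
Proof. intros Hc H0 Hw Hne. destruct (in_split _ _ Hw) as [l1 [l2 E]].
  exists l1, l2. split; auto. intro; subst. rewrite in_app_iff in H0. destruct H0 as [H0|[H0|[]]]; [|congruence].
  destruct (in_split _ _ H0) as [a [b E]]. subst.
  assert (chain (Kdelta I) (S0 :: b ++ [w])).
  { clear -Hc. rewrite <- app_assoc in Hc. induction a as [|x a IH]; simpl in *; auto.
    destruct a; simpl in *; destruct Hc; auto. apply IH. auto. }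
  apply Hne. eapply chain_S0; eauto. apply in_app_iff; simpl; auto. Qed.

Lemma sat_phi_body I rho prev : hs_sat (KI I) rho (phi_body I prev) <->
 ((lsat I rho Ls /\ ~ lsat I rho Lt) /\
  (forall i, 1 <= i <= sn_n I -> lsat I rho (LX i) -> ~ lsat I rho (LR i) -> hs_sat (KI I) rho (ptr (sn_F I i)))) /\
 (forall p, 1 <= p < length rho -> (exists i, 1 <= i <= sn_n I /\ hs_sat (KI I) (firstn p rho) (HA (HP (LPx i)))) ->
    hs_sat (KI I) (firstn p rho) (HA (HAnd (HAnd (HNeg (HP Ls)) ell2) (HA (HAnd ell2 (HNeg prev)))))).
Proof. unfold phi_body. cbn [hs_sat]. rewrite sat_bigand, sat_HBoxB.
  setoid_rewrite sat_HImp. setoid_rewrite sat_bigor. cbn [hs_sat kmu KI]. unfold lsat.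
  split; intros [[H1 H2] H3]; split; try split; try exact H1; try exact H3.
  - intros i Hi Ha Hb. apply H2; auto.
  - intros i Hi [Ha Hb]. apply H2; auto. Qed.

Lemma psi_lst I k rho1 rho2 : lst rho1 = lst rho2 -> (hs_sat (KI I) rho1 (psi I k) <-> hs_sat (KI I) rho2 (psi I k)).
Proof. destruct k; simpl. tauto. intros H; rewrite H; tauto. Qed.

Lemma lst_snoc {S} (l : list S) w : lst (l ++ [w]) = Some w.
Proof. unfold lst. rewrite rev_unit. reflexivity. Qed.

Lemma track_inv I rho : track (KI I) rho -> forall w, In w rho -> KW I w.
Proof. intros [_ [H _]] w Hw. rewrite Forall_forall in H. apply H, Hw. Qed.

Lemma LR_fail I w i : 1 <= i -> idx w = i -> ~ Kmu I w (LR i).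
Proof. destruct w; simpl; intros; try lia; tauto. Qed.

Lemma LX_iff I w m : KW I w -> inXr I m -> (Kmu I w (LX m) <-> w <> WXb m).
Proof. destruct w; simpl; intros; split; intros; try congruence; try tauto.
  - destruct H1 as [_ H1]; intro E; injection E; auto.
  - split; auto; intro; subst; tauto. Qed.

Lemma Q_pres I r w w' :
  (match w with WX i => i <= r | WXb i | Sb i => i < r | WZ i _ | WZb i _ => i <= r | S0 => True end) ->
  Kdelta I w w' ->
  (match w' with WX i => i <= r | WXb i | Sb i => i < r | WZ i _ | WZb i _ => i <= r | S0 => True end).
Proof. unfold Kdelta; intros HQ H; inLs; try discriminate; lia. Qed.

Lemma delta_WXb_nos I i w : Kdelta I (WXb i) w -> ~ Kmu I w Ls -> w = Sb i.
Proof. unfold Kdelta; intros H Hs; inLs; try discriminate; simpl in Hs; try tauto.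
  all: try (injection H0; intros; subst; auto). Qed.

Lemma delta_Sb I i w : Kdelta I (Sb i) w -> w = WX i.
Proof. unfold Kdelta; intros H; inLs; try discriminate.
  all: try (injection H0; intros; subst; auto). Qed.

Lemma track_hd_cons {S} (rho : list S) w0 : hd_error rho = Some w0 -> exists rest, rho = w0 :: rest.
Proof. destruct rho; simpl; intros H; inversion H; eauto. Qed.

Lemma forward I k' r w0 rho : 1 <= r <= sn_n I -> (w0 = WX r \/ w0 = WXb r) ->
  track (KI I) rho -> hd_error rho = Some w0 -> hs_sat (KI I) rho (phi_body I (psi I k')) ->
  (forall i, 1 <= i <= r -> ~ In (WXb i) rho -> peval (sig I rho) (sn_F I i) = true) /\
  (forall i, In (WXb i) rho -> ~ hs_sat (KI I) [WX i] (psi I k')) /\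
  (forall m, inXr I m -> (sig I rho (PX m) = true <-> ~ In (WXb m) rho)) /\
  (w0 = WX r -> ~ In (WXb r) rho).
Proof.
  intros Hr Hw0 Htr Hhd Hphi.
  apply sat_phi_body in Hphi. destruct Hphi as [[[Hs Ht] Hand] Hbox].
  destruct (track_hd_cons _ _ Hhd) as [rest ->].
  pose proof (track_inv _ _ Htr) as HW.
  destruct Htr as [_ [_ Hc]]. change (kst (KI I)) with kstate in *. change (kdelta (KI I)) with (Kdelta I) in Hc.
  assert (H0 : In S0 (w0 :: rest)).
  { apply NNPP; intro Hn; apply Ht; intros w Hw. specialize (HW w Hw).
    destruct w; simpl; auto; contradiction. }
  assert (HX : forall m, inXr I m -> (sig I (w0 :: rest) (PX m) = true <-> ~ In (WXb m) (w0 :: rest))).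
  { intros m Hm. rewrite sig_true. simpl letter_of. unfold lsat. split.
    - intros H Hin. specialize (H _ Hin). apply (LX_iff I (WXb m) m) in H; auto.
    - intros H w Hw. apply LX_iff; auto. intro; subst; auto. }
  split; [|split; [|split]]; auto.
  - intros i Hi Hn. apply ptr_sat. apply Hand. lia.
    + apply (proj1 (sig_true I _ (PX i))), HX. unfold inXr; lia. auto.
    + intros HR. destruct (IVT I i rest w0 Hc) as [w [Hw E]].
      * destruct Hw0; subst; simpl; lia.
      * exists S0; split; auto. simpl; lia.
      * apply (LR_fail I w i); auto. lia.
  - intros i Hin.
    assert (Hne : WXb i <> S0) by discriminate.
    destruct (split_before_end I _ _ Hc H0 Hin Hne) as [l1 [l2 [E Hl2]]].
    pose proof (HW _ Hin) as HWi. simpl in HWi. unfold inXr in HWi.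
    assert (Hf : firstn (length l1 + 1) (w0 :: rest) = l1 ++ [WXb i]).
    { rewrite E, firstn_app. replace (length l1 + 1 - length l1) with 1 by lia.
      rewrite firstn_all2 by lia. reflexivity. }
    assert (Hlen : 1 <= length l1 + 1 < length (w0 :: rest)).
    { rewrite E, length_app. simpl. destruct l2; [congruence|simpl; lia]. }
    specialize (Hbox _ Hlen). rewrite Hf in Hbox.
    destruct Hbox as [rho2 [Htr2 [Hhd2 [[Hns Hl2'] Hrest]]]].
    { exists i. split; [lia|]. exists [WXb i]. rewrite lst_snoc. split; [|split; auto].
      - split; [congruence|split; simpl; auto].
      - simpl; intros w [<-|[]]; simpl; auto. }
    rewrite lst_snoc in Hhd2. destruct (track_hd_cons _ _ Hhd2) as [r2 ->].
    apply sat_ell2 in Hl2'. destruct r2 as [|w r2]; [simpl in Hl2'; lia|]. destruct r2; [|simpl in Hl2'; lia].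
    destruct Htr2 as [_ [_ [Hd2 _]]].
    assert (w = Sb i).
    { apply (delta_WXb_nos I); auto. intro Hw. apply Hns. intros w' [<-|[<-|[]]]; simpl; auto. }
    subst w.
    destruct Hrest as [rho3 [Htr3 [Hhd3 [Hl3 Hnp]]]].
    simpl in Hhd3. destruct (track_hd_cons _ _ Hhd3) as [r3 ->].
    apply sat_ell2 in Hl3. destruct r3 as [|w r3]; [simpl in Hl3; lia|]. destruct r3; [|simpl in Hl3; lia].
    destruct Htr3 as [_ [_ [Hd3 _]]]. apply delta_Sb in Hd3. subst w.
    intro Hp. apply Hnp. eapply psi_lst; [|exact Hp]. reflexivity.
  - intros -> Hin.
    pose proof (chain_inv (Kdelta I) (fun w => match w with WX i => i <= r | WXb i | Sb i => i < r | WZ i _ | WZb i _ => i <= r | S0 => True end) (Q_pres I r) rest (WX r) Hc) as HQ.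
    specialize (HQ (le_n r) _ Hin). simpl in HQ. lia.
Qed.

Fixpoint zl (g : nat -> bool) (i u c : nat) : list kstate :=
  match c with 0 => [] | S c' => (if g u then WZ i u else WZb i u) :: zl g i (S u) c' end.

Definition xst (xf : nat -> bool) i := if xf i then WX i else WXb i.

Fixpoint build (I : snsat) (xf : nat -> bool) (zf : nat -> nat -> bool) (r : nat) : list kstate :=
  match r with
  | 0 => [S0]
  | S r' => (xst xf (S r') :: zl (zf (S r')) (S r') 1 (sn_j I (S r'))) ++ build I xf zf r'
  end.

Lemma mem_zl (g : nat -> bool) (i : nat) : forall c u w, In w (zl g i u c) -> exists v, u <= v < u + c /\
  ((w = WZ i v /\ g v = true) \/ (w = WZb i v /\ g v = false)).
Proof. induction c; simpl; intros u w H. destruct H.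
  destruct H as [<-|H].
  - exists u. split. lia. destruct (g u); auto.
  - destruct (IHc _ _ H) as [v [Hv E]]. exists v. split; auto; lia. Qed.

Lemma mem_zl_conv (g : nat -> bool) (i : nat) : forall c u v, u <= v < u + c -> In (if g v then WZ i v else WZb i v) (zl g i u c).
Proof. induction c; simpl; intros u v H. lia.
  destruct (Nat.eq_dec u v). subst; auto. right. apply IHc. lia. Qed.

Lemma mem_build I xf zf : forall r w, In w (build I xf zf r) -> w = S0 \/
  exists i, 1 <= i <= r /\ ((w = WX i /\ xf i = true) \/ (w = WXb i /\ xf i = false) \/
    exists u, 1 <= u <= sn_j I i /\ ((w = WZ i u /\ zf i u = true) \/ (w = WZb i u /\ zf i u = false))).
Proof. induction r; intros w H; cbn [build] in H.
  - destruct H as [<-|[]]; auto.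
  - rewrite in_app_iff in H. destruct H as [[<-|H]|H].
    + right. exists (S r). split. lia. unfold xst. destruct (xf (S r)); auto.
    + right. exists (S r). split. lia. right; right.
      destruct (mem_zl _ _ _ _ _ H) as [v [Hv E]]. exists v. split; auto. lia.
    + destruct (IHr _ H) as [?|[i [Hi E]]]; auto. right. exists i. split; auto. lia. Qed.

Lemma build_S0 I xf zf r : In S0 (build I xf zf r).
Proof. induction r; cbn [build]; simpl; auto. right. apply in_app_iff; auto. Qed.

Lemma build_X I xf zf r i : 1 <= i <= r -> In (xst xf i) (build I xf zf r).
Proof. induction r; cbn [build]; intros H. lia. apply in_app_iff.
  destruct (Nat.eq_dec i (S r)). subst; simpl; auto. right. apply IHr. lia. Qed.

Lemma build_Z I xf (zf : nat -> nat -> bool) r i u : 1 <= i <= r -> 1 <= u <= sn_j I i ->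
  In (if zf i u then WZ i u else WZb i u) (build I xf zf r).
Proof. induction r; cbn [build]; intros H Hu. lia. apply in_app_iff.
  destruct (Nat.eq_dec i (S r)). subst; left; right. apply mem_zl_conv. lia.
  right. apply IHr; lia. Qed.

Definition link I (w : kstate) (rest : list kstate) : Prop :=
  match rest with [] => True | b :: _ => Kdelta I w b end.

Lemma chain_zl I g i : forall c u w rest, u + c = sn_j I i -> inL i u w -> inXr I i ->
  chain (Kdelta I) rest -> (forall w', inL i (sn_j I i) w' -> link I w' rest) ->
  chain (Kdelta I) (w :: zl g i (S u) c ++ rest).
Proof. induction c; intros u w rest Hc Hw Hi Hr Hl; simpl.
  - replace u with (sn_j I i) in Hw by lia. specialize (Hl _ Hw). unfold link in Hl.
    destruct rest; auto.
  - split.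
    + unfold Kdelta. right; right; left. exists i, u. split; auto. split. lia. split; auto.
      unfold inL. simpl. destruct (g (S u)); auto.
    + apply (IHc (S u)); auto. lia. unfold inL; simpl. destruct (g (S u)); auto. Qed.

Lemma chain_build I xf zf : forall r, r <= sn_n I -> chain (Kdelta I) (build I xf zf r).
Proof. induction r; intros Hr; cbn [build]. simpl; auto.
  apply chain_zl; auto.
  - unfold inL, xst; simpl. destruct (xf (S r)); auto.
  - unfold inXr; lia.
  - apply IHr; lia.
  - intros w' Hw'. destruct r; simpl.
    + unfold Kdelta. right; right; right; right; left. split. lia. split; auto.
    + unfold Kdelta. right; right; right; left. exists (S (S r)). split. lia. split; auto.
      replace (S (S r) - 1) with (S r) by lia. unfold inL, xst; simpl. destruct (xf (S r)); auto. Qed.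

Lemma hd_build I xf zf r : 1 <= r -> hd_error (build I xf zf r) = Some (xst xf r).
Proof. destruct r; simpl; auto. lia. Qed.

Lemma lst_in {S} (l : list S) w : lst l = Some w -> In w l.
Proof. unfold lst. intros H. apply in_rev. destruct (rev l); simpl in *; inversion H; auto. Qed.

Lemma LZ_iff I w i u : KW I w -> inZr I i u -> (Kmu I w (LZ i u) <-> w <> WZb i u).
Proof. destruct w; simpl; intros Hw Hz; split; intros; try congruence; try tauto.
  - destruct H as [_ H]; intro E; injection E; intros; subst; auto.
  - split; auto. intro E; injection E; intros; subst; auto. Qed.

Lemma bool_iff (a b : bool) : (a = true <-> b = true) -> a = b.
Proof. destruct a, b; intuition congruence. Qed.

Lemma backward I k' r xf zf : snsat_wf I -> 1 <= r <= sn_n I ->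
  (forall i, 1 <= i <= r -> xf i = true -> exists s, peval s (sn_F I i) = true /\
     (forall m, 1 <= m < i -> s (PX m) = xf m) /\ (forall u, 1 <= u <= sn_j I i -> s (PZ i u) = zf i u)) ->
  (forall i, 1 <= i <= r -> xf i = false -> ~ hs_sat (KI I) [WX i] (psi I k')) ->
  hs_sat (KI I) [xst xf r] (psi I (S k')).
Proof.
  intros Hwf Hr Hsat Hneg.
  set (rho := build I xf zf r).
  assert (Hmem := mem_build I xf zf r).
  assert (HW : forall w, In w rho -> KW I w).
  { intros w Hw. destruct (Hmem w Hw) as [->|[i [Hi E]]]; simpl; auto.
    destruct E as [[-> _]|[[-> _]|[u [Hu [[-> _]|[-> _]]]]]]; simpl; unfold inXr, inZr; lia. }
  assert (HX : forall m, 1 <= m <= r -> (sig I rho (PX m) = xf m)).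
  { intros m Hm. apply bool_iff. rewrite sig_true. simpl letter_of. unfold lsat. split.
    - intros H. destruct (xf m) eqn:E; auto. specialize (H _ (build_X I xf zf r m Hm)).
      unfold xst in H. rewrite E in H. simpl in H. tauto.
    - intros E w Hw. apply LX_iff; auto. unfold inXr; lia. intros ->.
      destruct (Hmem _ Hw) as [H|[i [Hi H]]]; [discriminate|].
      destruct H as [[H _]|[[H H']|[u [_ [[H _]|[H _]]]]]]; try discriminate.
      injection H; intros; subst. congruence. }
  assert (HZ : forall i u, 1 <= i <= r -> 1 <= u <= sn_j I i -> sig I rho (PZ i u) = zf i u).
  { intros i u Hi Hu. apply bool_iff. rewrite sig_true. simpl letter_of. unfold lsat. split.
    - intros H. destruct (zf i u) eqn:E; auto. specialize (H _ (build_Z I xf zf r i u Hi Hu)).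
      rewrite E in H. simpl in H. destruct H as [_ H]. congruence.
    - intros E w Hw. apply LZ_iff; auto. unfold inZr; lia. intros ->.
      destruct (Hmem _ Hw) as [H|[i' [Hi' H]]]; [discriminate|].
      destruct H as [[H _]|[[H H']|[u' [_ [[H _]|[H H']]]]]]; try discriminate.
      injection H; intros; subst. congruence. }
  simpl. exists rho. split; [|split].
  { split; [unfold rho; destruct r; simpl; congruence|]. split.
    - apply Forall_forall. exact HW.
    - apply chain_build. lia. }
  { unfold rho. rewrite hd_build by lia. reflexivity. }
  apply sat_phi_body. split; [split; [split|]|].
  - intros w Hw. destruct (Hmem w Hw) as [->|[i [Hi E]]]; simpl; auto.
    destruct E as [[-> _]|[[-> _]|[u [Hu [[-> _]|[-> _]]]]]]; simpl; auto.
  - intros H. specialize (H _ (build_S0 I xf zf r)). simpl in H. exact H.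
  - intros i Hi HXi HRi. destruct (le_lt_dec i r) as [Hir|Hir].
    + assert (Exi : xf i = true).
      { rewrite <- HX by lia. apply sig_true. exact HXi. }
      destruct (Hsat i ltac:(lia) Exi) as [s [Hs [HsX HsZ]]].
      apply ptr_sat. rewrite <- Hs. eapply peval_ext. apply Hwf; lia.
      intros [m|i' u] Hp; simpl in Hp.
      * rewrite HX, HsX; auto; lia.
      * destruct Hp as [-> Hu]. rewrite HZ, HsZ; auto; lia.
    + exfalso. apply HRi. intros w Hw. destruct (Hmem w Hw) as [->|[i' [Hi' E]]]; simpl.
      unfold inXr; lia.
      destruct E as [[-> _]|[[-> _]|[u [Hu [[-> _]|[-> _]]]]]]; simpl; unfold inXr; split; lia.
  - intros p Hp [i0 [Hi0 [rho' [Htr' [Hhd' Hall]]]]].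
    destruct Htr' as [Hne _]. destruct rho' as [|h rho']; [congruence|].
    assert (Hh : Kmu I h (LPx i0)) by (apply Hall; simpl; auto).
    destruct h; simpl in Hh; try tauto. subst i.
    simpl in Hhd'. symmetry in Hhd'.
    assert (Hin : In (WXb i0) rho).
    { apply lst_in in Hhd'. rewrite <- (firstn_skipn p rho). apply in_app_iff; auto. }
    destruct (Hmem _ Hin) as [H|[i [Hi H]]]; [discriminate|].
    destruct H as [[H _]|[[H Hf]|[u [_ [[H _]|[H _]]]]]]; try discriminate.
    injection H; intros; subst i.
    specialize (Hneg i0 Hi Hf).
    exists [WXb i0; Sb i0]. split; [|split; [|split]].
    + split; [congruence|split].
      * repeat constructor; simpl; unfold inXr; lia.
      * simpl. split; auto. unfold Kdelta. left. exists i0. split; [unfold inXr; lia|auto].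
    + simpl; symmetry; exact Hhd'.
    + split.
      * intros Hq. specialize (Hq (Sb i0)). simpl in Hq. apply Hq; auto.
      * apply sat_ell2. reflexivity.
    + exists [Sb i0; WX i0]. split; [|split; [|split]].
      * split; [congruence|split].
        -- repeat constructor; simpl; unfold inXr; lia.
        -- simpl. split; auto. unfold Kdelta. right; left. exists i0. split; [unfold inXr; lia|auto].
      * reflexivity.
      * apply sat_ell2. reflexivity.
      * intros Hp'. apply Hneg. eapply psi_lst; [|exact Hp']. reflexivity.
Qed.

Definition xfv I i : bool := if excluded_middle_informative (vI I i) then true else false.

Lemma xfv_true I i : xfv I i = true <-> vI I i.
Proof. unfold xfv. destruct (excluded_middle_informative _); split; auto; discriminate. Qed.

Lemma back_main I k' r : snsat_wf I -> 1 <= r <= sn_n I ->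
  (forall i, 1 <= i <= r -> ~ vI I i -> ~ hs_sat (KI I) [WX i] (psi I k')) ->
  hs_sat (KI I) [xst (xfv I) r] (psi I (S k')).
Proof.
  intros Hwf Hr Hneg.
  assert (Hch : forall i, {s : pvar -> bool | 1 <= i -> vI I i ->
     (forall m, 1 <= m < i -> (s (PX m) = true <-> vpre I (i - 1) m)) /\ peval s (sn_F I i) = true}).
  { intros i. apply constructive_indefinite_description.
    destruct (classic (1 <= i /\ vI I i)) as [[H1 H2]|Hn].
    - apply vI_S in H2; auto. destruct H2 as [s [Hs1 Hs2]]. exists s. auto.
    - exists (fun _ => true). intros; exfalso; auto. }
  apply (backward I k' r (xfv I) (fun i u => proj1_sig (Hch i) (PZ i u))); auto.
  - intros i Hi Ex. exists (proj1_sig (Hch i)).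
    destruct (proj2_sig (Hch i)) as [HsX Hs]. lia. apply xfv_true; auto.
    split; auto. split; auto.
    intros m Hm. apply bool_iff. rewrite HsX, xfv_true by lia. apply vpre_le; lia.
  - intros i Hi Ef. apply Hneg; auto. rewrite <- xfv_true. congruence.
Qed.

Lemma step I k' (Hwf : snsat_wf I)
  (IH : forall i, 1 <= i <= sn_n I -> i <= k' -> (vI I i <-> hs_sat (KI I) [WX i] (psi I k')))
  r (Hr : 1 <= r <= sn_n I) :
  (r <= S k' -> (vI I r <-> hs_sat (KI I) [WX r] (psi I (S k')))) /\
  (r <= k' -> (~ vI I r <-> hs_sat (KI I) [WXb r] (psi I (S k')))).
Proof.
  assert (FW : forall w0, (w0 = WX r \/ w0 = WXb r) -> hs_sat (KI I) [w0] (psi I (S k')) ->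
    exists rho : list kstate,
    (forall i, 1 <= i <= r -> (forall m, 1 <= m < i -> (~ In (WXb m) rho <-> vI I m)) -> ~ In (WXb i) rho -> vI I i) /\
    (forall i, 1 <= i <= r -> i <= k' -> In (WXb i) rho -> ~ vI I i) /\
    (w0 = WX r -> ~ In (WXb r) rho) /\ In w0 rho).
  { intros w0 Hw0 H. destruct H as [rho [Htr [Hhd Hphi]]].
    destruct (forward I k' r w0 rho Hr Hw0 Htr Hhd Hphi) as [E1 [E2 [E3 E4]]].
    exists rho. split; [|split; [|split]]; auto.
    - intros i Hi Hlt Hn. apply vI_S. lia. exists (sig I rho). split; auto.
      intros m Hm. rewrite E3 by (unfold inXr; lia). rewrite vpre_le by lia. apply Hlt; lia.
    - intros i Hi Hik Hin. rewrite IH by lia. apply E2; auto.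
    - destruct (track_hd_cons _ _ Hhd) as [rest ->]. simpl; auto. }
  split.
  - intros Hrk. split.
    + intros Hv. assert (E : xst (xfv I) r = WX r).
      { unfold xst. replace (xfv I r) with true; auto. symmetry; apply xfv_true; auto. }
      rewrite <- E. apply back_main; auto.
      intros i Hi Hn. destruct (Nat.eq_dec i r). subst; tauto. rewrite <- IH by lia. auto.
    + intros H. destruct (FW _ (or_introl eq_refl) H) as [rho [A [B [C _]]]].
      assert (Cl : forall n0 i, i < n0 -> 1 <= i < r -> (~ In (WXb i) rho <-> vI I i)).
      { induction n0; intros i Hi Hir. lia. split.
        - apply A. lia. intros m Hm. apply IHn0; lia.
        - intros Hv Hin. apply (B i); auto; lia. }
      apply A; auto. lia. intros m Hm. apply (Cl (S m)); lia.
  - intros Hrk. split.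
    + intros Hv. assert (E : xst (xfv I) r = WXb r).
      { unfold xst. replace (xfv I r) with false; auto. symmetry.
        destruct (xfv I r) eqn:X; auto. apply xfv_true in X; tauto. }
      rewrite <- E. apply back_main; auto.
      intros i Hi Hn. rewrite <- IH by lia. auto.
    + intros H. destruct (FW _ (or_intror eq_refl) H) as [rho [A [B [C D]]]].
      apply (B r); auto. lia.
Qed.

Theorem mainTheorem5 (I : snsat) (Hwf : snsat_wf I) (k r : nat)
  (Hk : k <= sn_n I + 1) (Hr : 1 <= r <= sn_n I) :
  (r <= k -> (vI I r <-> hs_sat (KI I) [WX r] (psi I k))) /\
  (r + 1 <= k -> (~ vI I r <-> hs_sat (KI I) [WXb r] (psi I k))).
Proof.
  assert (P1 : forall k, forall i, 1 <= i <= sn_n I -> i <= k -> (vI I i <-> hs_sat (KI I) [WX i] (psi I k))).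
  { induction k0; intros i Hi Hik. lia. apply (step I k0 Hwf IHk0 i Hi). lia. }
  destruct k as [|k']. split; intros; lia.
  destruct (step I k' Hwf (P1 k') r Hr) as [H1 H2]. split; auto.
  intros H. apply H2. lia.
Qed.
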